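(* Let $\varphi=(\mathfrak{m}_1,\dots,\mathfrak{m}_\ell)$ be normalizer-adapted. Fix $1\le p\le\ell_0$ and $i\in I_p$. Then: (a) if $j\in I^+_p$ and $1\le k\le\ell$, then $[\phi_p(i)\phi_p(j)k]=[ijk]$; (b) if $j,k\in I^0_p$, then $[\phi_p(i)jk]=[ijk]$; (c) if $1\le q\le\ell_0$ with $[V_p,V_q]=0$, then $[q\,\phi_p(i)\,\phi_q(\phi_p(i))]=[q\,i\,\phi_q(i)]$.
   Context: $M=\mathsf{G}/\mathsf{H}$ almost-effective, $\mathsf{G},\mathsf{H}$ compact connected; $Q$ an $\mathrm{Ad}(\mathsf{G})$-invariant inner product on $\mathfrak{g}$, $\mathfrak{m}=\mathfrak{h}^{\perp_Q}$, $\mathfrak{m}_0=\{X\in\mathfrak{m}:[\mathfrak{h},X]=0\}$. $\varphi$ is an ordered $Q$-orthogonal decomposition of $\mathfrak{m}$ into irreducible $\mathrm{Ad}(\mathsf{H})$-modules with $\mathfrak{m}_0=\mathfrak{m}_1+\dots+\mathfrak{m}_{\ell_0}$, each $\mathfrak{m}_p$ ($p\le\ell_0$) one-dimensional, spanned by a $Q$-unit $V_p$. $[ijk]=\sum Q([e_\alpha,e_\beta],e_\gamma)^2$ over a $Q$-orthonormal adapted basis with $e_\alpha\in\mathfrak{m}_i,e_\beta\in\mathfrak{m}_j,e_\gamma\in\mathfrak{m}_k$ (symmetric in $i,j,k$). Normalizer-adapted: if $p\le\ell_0$ and $[\mathfrak{m}_p,\mathfrak{m}_i]\neq0$ then $[\mathfrak{m}_p,\mathfrak{m}_i]\cap\mathfrak{m}_j\ne0$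 for some $j$. For such $\varphi$ and $p\le\ell_0$: $I^0_p=\{i:\mathrm{ad}(V_p)|_{\mathfrak{m}_i}=0\}$, $I^+_p=\{1,\dots,\ell\}\setminus I^0_p$; for $i\in I^+_p$ there is a unique $j$ with $[pij]>0$, denoted $\phi_p(i)$, and $\phi_p(i)=i$ for $i\in I^0_p$; $I_p=\{i\in I^+_p: i<\phi_p(i)\}$. *)

(* Defs.v *)
(* Lie-algebraic (infinitesimal) data of M = G/H. *)
From HB Require Import structures.
From mathcomp Require Import all_boot all_order all_algebra.
From mathcomp Require Import reals.
Set Implicit Arguments. Unset Strict Implicit. Unset Printing Implicit Defensive.
Import Order.TTheory GRing.Theory Num.Theory.
Local Open Scope ring_scope.

Section Setting.
Variables (R : realType) (n : nat).
Local Notation V := 'rV[R]_n.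

Definition form (Q : 'M[R]_n) (x y : V) : R := (x *m Q *m y^T) 0 0.

Definition is_lie_bracket (br : V -> V -> V) : Prop :=
  [/\ forall a x y z, br (a *: x + y) z = a *: br x z + br y z,
      forall a x y z, br z (a *: x + y) = a *: br z x + br z y,
      forall x, br x x = 0 &
      forall x y z, br x (br y z) + br y (br z x) + br z (br x y) = 0].

(* Q is an ad(g)-invariant inner product (infinitesimal Ad(G)-invariance) *)
Definition ad_invariant_inner (br : V -> V -> V) (Q : 'M[R]_n) : Prop :=
  [/\ Q^T = Q,
      forall x, x != 0 -> 0 < form Q x x &
      forall x y z, form Q (br x y) z + form Q y (br x z) = 0].

Variables (br : V -> V -> V) (Q : 'M[R]_n).
(* The decomposition phi = (m_0,...,m_{l-1}) (0-indexed) is given by a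
   Q-orthonormal adapted basis: m_i is spanned by e i 0, ..., e i (d i - 1). *)
Variables (l : nat) (d : 'I_l -> nat) (e : 'I_l -> nat -> V).

Definition modsp (i : 'I_l) : {vspace V} :=
  <<[seq e i a | a <- iota 0 (d i)]>>%VS.
Definition msp : {vspace V} := (\sum_(i < l) modsp i)%VS.
Definition m0sp (l0 : nat) : {vspace V} := (\sum_(i < l | (i < l0)%N) modsp i)%VS.

(* h = m^{perp_Q} *)
Definition in_h (x : V) : Prop :=
  forall (i : 'I_l) (a : nat), (a < d i)%N -> form Q x (e i a) = 0.

Definition bracket3 (i j k : 'I_l) : R :=
  \sum_(a < d i) \sum_(b < d j) \sum_(c < d k)
     (form Q (br (e i a) (e j b)) (e k c)) ^+ 2.

(* V_p, the Q-unit spanning m_p for p < l0 *)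
Definition Vp (p : 'I_l) : V := e p 0.

Definition basis_hyps : Prop :=
  (forall (i j : 'I_l) (a b : nat), (a < d i)%N -> (b < d j)%N ->
       form Q (e i a) (e j b) = ((i == j) && (a == b))%:R)
  /\ (forall i : 'I_l, (0 < d i)%N).

(* h is a subalgebra, and M = G/H is almost effective:
   h contains no nonzero ideal of g *)
Definition subalgebra_effective : Prop :=
  (forall x y, in_h x -> in_h y -> in_h (br x y))
  /\ (forall W : {vspace V},
       (forall x y, x \in W -> br y x \in W) ->
       (forall x, x \in W -> in_h x) -> W = 0%VS).

(* each m_i is an irreducible ad(h)- (= Ad(H)-, H connected) module *)
Definition irreducible_modules : Prop :=
  (forall (i : 'I_l) x y, in_h x -> y \in modsp i -> br x y \in modsp i)
  /\ (forall (i : 'I_l) (W : {vspace V}), (W <= modsp i)%VS ->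
       (forall x y, in_h x -> y \in W -> br x y \in W) ->
       W != 0%VS -> W = modsp i).

Definition m0_first (l0 : nat) : Prop :=
  [/\ (l0 <= l)%N, (forall p : 'I_l, (p < l0)%N -> d p = 1%N) &
   (forall x, (x \in msp /\ forall y, in_h y -> br y x = 0) <-> x \in m0sp l0)].

Definition normalizer_adapted (l0 : nat) : Prop :=
  forall p i : 'I_l, (p < l0)%N ->
      (exists2 x, x \in modsp i & br (Vp p) x != 0) ->
      exists j : 'I_l, exists2 x, x \in modsp i &
          (br (Vp p) x != 0) && (br (Vp p) x \in modsp j).

Definition normalizer_adapted_setting (l0 : nat) : Prop :=
  [/\ is_lie_bracket br /\ ad_invariant_inner br Q, basis_hyps,
      subalgebra_effective, irreducible_modules &
      m0_first l0 /\ normalizer_adapted l0].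

Definition I0 (p i : 'I_l) : bool :=
  [forall a : 'I_(d i), br (Vp p) (e i a) == 0].

Definition phi (p i : 'I_l) : 'I_l :=
  if I0 p i then i else odflt i [pick j : 'I_l | 0 < bracket3 p i j].

Definition Iset (p i : 'I_l) : bool := ~~ I0 p i && (i < phi p i)%N.

End Setting.

(* Main.v *)
Require Import Defs.
From HB Require Import structures.
From mathcomp Require Import all_boot all_order all_algebra.
From mathcomp Require Import reals.
From mathcomp Require Import complex.
From mathcomp Require Import ring.
Set Implicit Arguments. Unset Strict Implicit. Unset Printing Implicit Defensive.
Import Order.TTheory GRing.Theory Num.Theory.
Local Open Scope ring_scope.

Lemma sym_eig (R : rcfType) d (A : 'M[R]_d.+1) : A^T = A ->
  exists r : R, exists2 c : 'rV_d.+1, c != 0 & c *m A = r *: c.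
Proof.
move=> As.
pose f := real_complex R.
pose AC := map_mx f A.
have herm : AC \is hermsymmx.
  apply: realsym_hermsym.
    apply/is_hermitianmxP; rewrite expr0 scale1r map_mx_id //; apply/matrixP => i j; rewrite !mxE; congr f; by rewrite -[in LHS]As mxE.
  by apply/mxOverP => i j; rewrite mxE; apply/complex_realP; eexists.
have sp_real := hermitian_spectral_diag_real herm.
have /orthomx_spectralP Aeq := hermitian_normalmx herm.
set P := spectralmx AC in Aeq; set D := spectral_diag AC in Aeq sp_real.
have Pu : P \in unitmx by apply: spectral_unit.
have PA : P *m AC = diag_mx D *m P.
  by rewrite [in LHS]Aeq !mulmxA mulmxV // mul1mx.
have [r zr] : exists r, D 0 0 = f r.
  by apply/complex_realP; move/mxOverP: sp_real; apply.
have ev : eigenvalue AC (f r).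
  apply/eigenvalueP; exists (row 0 P).
    by rewrite -row_mul PA row_mul row_diag_mx -scalemxAl -rowE zr.
  apply/eqP => P0; move: Pu; rewrite unitmxE (expand_det_row _ 0) big1 ?unitr0 // => j _.
  by have := congr1 (fun v : 'rV_d.+1 => v 0 j) P0; rewrite !mxE => ->; rewrite mul0r.
exists r.
move: ev; rewrite eigenvalue_root_char /AC -map_char_poly fmorph_root -eigenvalue_root_char.
by move/eigenvalueP => [c cA c0]; exists c.
Qed.

Lemma sym_eig' (R : rcfType) m (A : 'M[R]_m) : (0 < m)%N -> A^T = A ->
  exists r : R, exists2 c : 'rV_m, c != 0 & c *m A = r *: c.
Proof. by case: m A => // m A _; apply: sym_eig. Qed.

Section Main.
Variables (R : realType) (n : nat).
Local Notation V := 'rV[R]_n.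
Variables (br : V -> V -> V) (Q : 'M[R]_n) (l : nat) (d : 'I_l -> nat)
  (e : 'I_l -> nat -> V) (l0 : nat).
Hypothesis HS : normalizer_adapted_setting br Q d e l0.

Local Notation fm := (Defs.form Q).
Local Notation M k := (modsp d e k).
Local Notation inh := (in_h Q d e).
Local Notation br3 := (bracket3 br Q d e).
Local Notation I0b := (I0 br d e).
Local Notation ph := (phi br Q d e).
Local Notation Vq := (Vp e).

Lemma Qsym : Q^T = Q. Proof. by case: HS => [[_ []]]. Qed.
Lemma fm_pos x : x != 0 -> 0 < fm x x. Proof. by case: HS => [[_ [_ h _]] _ _ _ _]; apply: h. Qed.
Lemma fm_inv x y z : fm (br x y) z + fm y (br x z) = 0.
Proof. by case: HS => [[_ [_ _ h]] _ _ _ _]; apply: h. Qed.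
Lemma br_lin1 a x y z : br (a *: x + y) z = a *: br x z + br y z.
Proof. by case: HS => [[[h _ _ _] _] _ _ _ _]; apply: h. Qed.
Lemma br_lin2 a x y z : br z (a *: x + y) = a *: br z x + br z y.
Proof. by case: HS => [[[_ h _ _] _] _ _ _ _]; apply: h. Qed.
Lemma br_xx x : br x x = 0. Proof. by case: HS => [[[_ _ h _] _] _ _ _ _]; apply: h. Qed.
Lemma jacobi x y z : br x (br y z) + br y (br z x) + br z (br x y) = 0.
Proof. by case: HS => [[[_ _ _ h] _] _ _ _ _]; apply: h. Qed.

Lemma fmDl x y z : fm (x + y) z = fm x z + fm y z.
Proof. by rewrite /Defs.form !mulmxDl mxE. Qed.
Lemma fmZl a x z : fm (a *: x) z = a * fm x z.
Proof. by rewrite /Defs.form -!scalemxAl mxE. Qed.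
Lemma fmC x y : fm x y = fm y x.
Proof.
rewrite /Defs.form; transitivity ((x *m Q *m y^T)^T 0 0); first by rewrite [in RHS]mxE.
by rewrite !trmx_mul trmxK Qsym mulmxA.
Qed.
Lemma fmDr x y z : fm z (x + y) = fm z x + fm z y.
Proof. by rewrite fmC fmDl !(fmC z). Qed.
Lemma fmZr a x z : fm z (a *: x) = a * fm z x.
Proof. by rewrite fmC fmZl fmC. Qed.
Lemma fm0l z : fm 0 z = 0.
Proof. by have := fmZl 0 0 z; rewrite scale0r mul0r. Qed.
Lemma fm0r z : fm z 0 = 0.
Proof. by rewrite fmC fm0l. Qed.
Lemma fmNl x z : fm (- x) z = - fm x z.
Proof. by rewrite -scaleN1r fmZl mulN1r. Qed.
Lemma fmNr x z : fm z (- x) = - fm z x.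
Proof. by rewrite fmC fmNl fmC. Qed.
Lemma fm_suml I r (P : pred I) (F : I -> V) z :
  fm (\sum_(i <- r | P i) F i) z = \sum_(i <- r | P i) fm (F i) z.
Proof.
elim/big_rec2: _ => [|i y1 y2 _ <-]; first by rewrite fm0l.
by rewrite fmDl.
Qed.
Lemma fm_sumr I r (P : pred I) (F : I -> V) z :
  fm z (\sum_(i <- r | P i) F i) = \sum_(i <- r | P i) fm z (F i).
Proof. by rewrite fmC fm_suml; apply: eq_bigr => i _; rewrite fmC. Qed.
Lemma fm_eq0 x : fm x x = 0 -> x = 0.
Proof. move=> h; apply/eqP; case: eqP => // /eqP /fm_pos; rewrite h ltxx. done. Qed.

Lemma br0l z : br 0 z = 0.
Proof. have := br_lin1 1 0 0 z; rewrite !scale1r addr0 => h. by apply: (@addrI _ (br 0 z)); rewrite addr0 -h. Qed.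
Lemma br0r z : br z 0 = 0.
Proof. have := br_lin2 1 0 0 z; rewrite !scale1r addr0 => h. by apply: (@addrI _ (br z 0)); rewrite addr0 -h. Qed.
Lemma brDl x y z : br (x + y) z = br x z + br y z.
Proof. by have := br_lin1 1 x y z; rewrite !scale1r. Qed.
Lemma brDr x y z : br z (x + y) = br z x + br z y.
Proof. by have := br_lin2 1 x y z; rewrite !scale1r. Qed.
Lemma brZl a x z : br (a *: x) z = a *: br x z.
Proof. by have := br_lin1 a x 0 z; rewrite br0l !addr0. Qed.
Lemma brZr a x z : br z (a *: x) = a *: br z x.
Proof. by have := br_lin2 a x 0 z; rewrite br0r !addr0. Qed.
Lemma brNl x z : br (- x) z = - br x z.
Proof. by rewrite -scaleN1r brZl scaleN1r. Qed.
Lemma brNr x z : br z (- x) = - br z x.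
Proof. by rewrite -scaleN1r brZr scaleN1r. Qed.
Lemma br_skew x y : br x y = - br y x.
Proof.
have := br_xx (x + y); rewrite brDl !brDr !br_xx add0r addr0 => /eqP.
by rewrite addr_eq0 => /eqP.
Qed.
Lemma br_suml I r (P : pred I) (F : I -> V) z :
  br (\sum_(i <- r | P i) F i) z = \sum_(i <- r | P i) br (F i) z.
Proof.
elim/big_rec2: _ => [|i y1 y2 _ <-]; first by rewrite br0l.
by rewrite brDl.
Qed.
Lemma br_sumr I r (P : pred I) (F : I -> V) z :
  br z (\sum_(i <- r | P i) F i) = \sum_(i <- r | P i) br z (F i).
Proof.
elim/big_rec2: _ => [|i y1 y2 _ <-]; first by rewrite br0r.
by rewrite brDr.
Qed.

Lemma fm_skew u x z : fm (br u x) z = - fm x (br u z).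
Proof. by apply/eqP; rewrite -addr_eq0 fm_inv. Qed.

Lemma T_swap12 x y z : fm (br x y) z = - fm (br y x) z.
Proof. by rewrite br_skew fmNl. Qed.
Lemma T_swap23 x y z : fm (br x y) z = - fm (br x z) y.
Proof. by rewrite fm_skew fmC. Qed.

Lemma br_deriv u x y : br u (br x y) = br (br u x) y + br x (br u y).
Proof.
have := jacobi u x y; rewrite (br_skew y u) brNr (br_skew y (br u x)).
by move/eqP; rewrite -addrA -opprD subr_eq0 addrC => /eqP.
Qed.

Lemma ON (i j : 'I_l) (a b : nat) : (a < d i)%N -> (b < d j)%N ->
  fm (e i a) (e j b) = ((i == j) && (a == b))%:R.
Proof. by case: HS => [_ [h _] _ _ _]; apply: h. Qed.
Lemma d_gt0 i : (0 < d i)%N. Proof. by case: HS => [_ [_ h] _ _ _]. Qed.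

Lemma ONo k (a b : 'I_(d k)) : fm (e k a) (e k b) = (a == b)%:R.
Proof. by rewrite ON // eqxx. Qed.

Lemma e_in k (a : nat) : (a < d k)%N -> e k a \in M k.
Proof. by move=> ha; apply: memv_span; apply/mapP; exists a; rewrite ?mem_iota. Qed.

Lemma sum_in k (c : 'I_(d k) -> R) : \sum_(a < d k) c a *: e k a \in M k.
Proof. by apply: rpred_sum => a _; apply: rpredZ; apply: e_in. Qed.

Lemma fm_sum_e k (c : 'I_(d k) -> R) (b : 'I_(d k)) :
  fm (\sum_(a < d k) c a *: e k a) (e k b) = c b.
Proof.
rewrite fm_suml (bigD1 b) //= fmZl ONo eqxx mulr1 big1 ?addr0 // => a nab.
by rewrite fmZl ONo (negbTE nab) mulr0.
Qed.

Lemma fm_sum_o k j (c : 'I_(d k) -> R) b : j != k -> (b < d j)%N ->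
  fm (\sum_(a < d k) c a *: e k a) (e j b) = 0.
Proof.
move=> njk hb; rewrite fm_suml big1 // => a _.
by rewrite fmZl ON // eq_sym (negbTE njk) mulr0.
Qed.

Lemma memv_modspP k x :
  reflect (exists c : 'I_(d k) -> R, x = \sum_(a < d k) c a *: e k a) (x \in M k).
Proof.
apply: (iffP idP); last by move=> [c ->]; apply: sum_in.
rewrite /modsp span_def big_map.
have -> : iota 0 (d k) = index_iota 0 (d k) by rewrite /index_iota subn0.
rewrite big_mkord => /memv_sumP [vs Hvs ->].
exists (fun a => fm (vs a) (e k a)); apply: eq_bigr => a _.
by have /vlineP [c ->] := Hvs a isT; rewrite fmZl ONo eqxx mulr1.
Qed.

Lemma expand k x : x \in M k -> x = \sum_(a < d k) fm x (e k a) *: e k a.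
Proof.
move=> /memv_modspP [c ->]; apply: eq_bigr => a _; by rewrite fm_sum_e.
Qed.

Lemma fm_other k j x b : x \in M k -> j != k -> (b < d j)%N -> fm x (e j b) = 0.
Proof. by move=> /memv_modspP [c ->] njk hb; apply: fm_sum_o. Qed.

Lemma fm_expand k x w : x \in M k ->
  fm x w = \sum_(a < d k) fm x (e k a) * fm (e k a) w.
Proof. by move=> /expand {1}->; rewrite fm_suml; apply: eq_bigr => a _; rewrite fmZl. Qed.

Lemma fm_norm k x : x \in M k -> fm x x = \sum_(a < d k) fm x (e k a) ^+ 2.
Proof. by move=> hx; rewrite (fm_expand _ hx); apply: eq_bigr => a _; rewrite (fmC (e k a)). Qed.

Lemma coef_neq0 k x : x \in M k -> x != 0 -> exists a : 'I_(d k), fm x (e k a) != 0.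
Proof.
move=> hx nx; apply/existsP; apply: contraNT nx; rewrite negb_exists => /forallP h.
by rewrite (expand hx) big1 // => a _; rewrite (eqP (negbNE (h a))) scale0r.
Qed.

Lemma sumsq_ge0 (I : finType) (F : I -> R) : 0 <= \sum_i F i ^+ 2.
Proof. by apply: sumr_ge0 => i _; apply: sqr_ge0. Qed.

Lemma sumsq_gt0 (I : finType) (F : I -> R) (i0 : I) : F i0 != 0 -> 0 < \sum_i F i ^+ 2.
Proof.
move=> h; rewrite (bigD1 i0) //=; apply: (@lt_le_trans _ _ (F i0 ^+ 2)).
  by rewrite lt_neqAle eq_sym sqrf_eq0 h sqr_ge0.
by rewrite lerDl; apply: sumr_ge0 => i _; apply: sqr_ge0.
Qed.

Definition glin (g : V -> V) := forall a x y, g (a *: x + y) = a *: g x + g y.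
Definition mxf (g : V -> V) : 'M[R]_n := \matrix_(i, j) g (delta_mx 0 i) 0 j.

Lemma glin0 g : glin g -> g 0 = 0.
Proof. move=> gl; have := gl 1 0 0; rewrite !scale1r addr0 => h.
by apply: (@addrI _ (g 0)); rewrite addr0 -h. Qed.
Lemma glinZ g : glin g -> forall a x, g (a *: x) = a *: g x.
Proof. by move=> gl a x; have := gl a x 0; rewrite addr0 glin0 // addr0. Qed.
Lemma glinD g : glin g -> forall x y, g (x + y) = g x + g y.
Proof. by move=> gl x y; have := gl 1 x y; rewrite !scale1r. Qed.
Lemma glin_sum g : glin g -> forall (I : Type) (r : seq I) (P : pred I) (F : I -> V),
  g (\sum_(i <- r | P i) F i) = \sum_(i <- r | P i) g (F i).
Proof.
move=> gl I r P F; elim/big_rec2: _ => [|i y1 y2 _ <-]; first by rewrite glin0.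
by rewrite glinD.
Qed.

Lemma mxfE g : glin g -> forall x, x *m mxf g = g x.
Proof.
move=> gl x; apply/rowP => j.
rewrite {2}(row_sum_delta x) glin_sum // !mxE summxE; apply: eq_bigr => i _.
by rewrite glinZ // !mxE.
Qed.

Lemma irr1 : forall (i : 'I_l) x y, inh x -> y \in M i -> br x y \in M i.
Proof. by case: HS => [_ _ _ [h _] _]. Qed.
Lemma irr2 : forall (i : 'I_l) (W : {vspace V}), (W <= M i)%VS ->
       (forall x y, inh x -> y \in W -> br x y \in W) -> W != 0%VS -> W = M i.
Proof. by case: HS => [_ _ _ [_ h] _]. Qed.

Lemma irr_pre k (g : V -> V) (U : {vspace V}) : glin g ->
  (forall y w, inh y -> w \in M k -> g w \in U -> g (br y w) \in U) ->
  forall x0, x0 \in M k -> g x0 \in U -> x0 != 0 ->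
  forall x, x \in M k -> g x \in U.
Proof.
move=> gl hinv x0 hx0 gx0 nx0.
pose f : 'End(V) := linfun (mulmxr (mxf g)).
have fE : forall x, f x = g x by move=> x; rewrite lfunE /= mxfE.
pose W := (M k :&: f @^-1: U)%VS.
have memW : forall x, (x \in W) = (x \in M k) && (g x \in U).
  by move=> x; rewrite memv_cap -memv_preim fE.
have WM : W = M k.
  apply: irr2; first exact: capvSl.
    move=> y w hy; rewrite !memW => /andP [hw gw].
    by rewrite irr1 //= hinv.
  apply/eqP => W0; have : x0 \in W by rewrite memW hx0 gx0.
  by rewrite W0 memv0 (negbTE nx0).
move=> x hx; have : x \in W by rewrite WM.
by rewrite memW => /andP [].
Qed.

Implicit Types p q i j k : 'I_l.
Lemma dp1 (p : 'I_l) : (p < l0)%N -> d p = 1%N.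
Proof. by case: HS => [_ _ _ _ [[_ h _] _]]; apply: h. Qed.

Lemma Vp_in (p : 'I_l) : (p < l0)%N -> Vq p \in m0sp d e l0.
Proof.
move=> hp; rewrite memvE; apply: (sumv_sup p) => //; rewrite -memvE.
by apply: e_in; apply: d_gt0.
Qed.

Lemma Vp_comm (p : 'I_l) y : (p < l0)%N -> inh y -> br y (Vq p) = 0.
Proof.
move=> hp hy; case: HS => [_ _ _ _ [[_ _ h] _]].
by have [_ ] := (h (Vq p)).2 (Vp_in hp); apply.
Qed.

Lemma Dcomm (p : 'I_l) y w : (p < l0)%N -> inh y -> br (Vq p) (br y w) = br y (br (Vq p) w).
Proof.
move=> hp hy; rewrite br_deriv (br_skew (Vq p) y) Vp_comm // oppr0 br0l add0r.
by [].
Qed.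

Lemma glin_br u : glin (br u). Proof. by move=> a x y; apply: br_lin2. Qed.

Lemma I0P p k : reflect (forall a : 'I_(d k), br (Vq p) (e k a) = 0) (I0b p k).
Proof. by apply: (iffP forallP) => h a; [apply/eqP; apply: h | apply/eqP; apply: h]. Qed.

Lemma I0_zero p k x : I0b p k -> x \in M k -> br (Vq p) x = 0.
Proof.
move=> /I0P h /expand ->; rewrite br_sumr big1 // => a _.
by rewrite brZr h scaler0.
Qed.

Lemma br3_p p i j : (p < l0)%N -> br3 p i j =
  \sum_(b < d i) \sum_(c < d j) fm (br (Vq p) (e i b)) (e j c) ^+ 2.
Proof.
move=> hp; rewrite /bracket3.
rewrite (eq_bigr (fun _ => \sum_(b < d i) \sum_(c < d j) fm (br (Vq p) (e i b)) (e j c) ^+ 2)).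
  by rewrite sumr_const card_ord (dp1 hp) mulr1n.
move=> a _; have -> : nat_of_ord a = 0%N.
  have : (nat_of_ord a < 1)%N by rewrite -(dp1 hp) ltn_ord.
  by case: (nat_of_ord a).
by [].
Qed.

Lemma br3_sym23 i j k : br3 i j k = br3 i k j.
Proof.
rewrite /bracket3; apply: eq_bigr => a _; rewrite exchange_big; apply: eq_bigr => c _.
by apply: eq_bigr => b _; rewrite T_swap23 sqrrN.
Qed.

Lemma br3_sym12 i j k : br3 i j k = br3 j i k.
Proof.
rewrite /bracket3 exchange_big; apply: eq_bigr => b _; apply: eq_bigr => a _.
by apply: eq_bigr => c _; rewrite T_swap12 sqrrN.
Qed.

Lemma sum_pos (I : finType) (G : I -> R) (b0 : I) :
  (forall b, 0 <= G b) -> 0 < G b0 -> 0 < \sum_b G b.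
Proof.
move=> h0 hb; rewrite (bigD1 b0) //=; apply: (@lt_le_trans _ _ (G b0)) => //.
by rewrite lerDl; apply: sumr_ge0.
Qed.

Lemma I0_br3 p k j : (p < l0)%N -> I0b p k -> br3 p k j = 0.
Proof.
move=> hp /I0P h; rewrite br3_p //; apply: big1 => b _; apply: big1 => c _.
by rewrite h fm0l expr0n.
Qed.

Lemma notI0 p k : (p < l0)%N -> ~~ I0b p k ->
  [/\ (forall x, x \in M k -> br (Vq p) x \in M (ph p k)),
      0 < br3 p k (ph p k) &
      (forall j, j != ph p k -> br3 p k j = 0)].
Proof.
move=> hp nI0.
have [a ha] : exists a : 'I_(d k), br (Vq p) (e k a) != 0.
  by move: nI0; rewrite /I0 negb_forall => /existsP.
have [j [x hx /andP [nx hxj]]] : exists j : 'I_l, exists2 x, x \in M k &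
          (br (Vq p) x != 0) && (br (Vq p) x \in M j).
  case: HS => [_ _ _ _ [_ h]]; apply: h => //.
  by exists (e k a) => //; apply: e_in.
have maps : forall y, y \in M k -> br (Vq p) y \in M j.
  apply: (irr_pre (glin_br _) _ hx hxj).
    by move=> y w hy hw hDw; rewrite Dcomm // irr1.
  by apply: contraNneq nx => ->; rewrite br0r.
have pos : 0 < br3 p k j.
  rewrite br3_p //; apply: (sum_pos _ (b0 := a)).
    by move=> b; apply: sumsq_ge0.
  have [c hc] := coef_neq0 (maps _ (e_in (ltn_ord a))) ha.
  exact: (@sumsq_gt0 _ (fun c : 'I_(d j) => fm (br (Vq p) (e k a)) (e j c)) c hc).
have zero : forall j', j' != j -> br3 p k j' = 0.
  move=> j' nj; rewrite br3_p //; apply: big1 => b _; apply: big1 => c _.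
  by rewrite (fm_other (maps _ (e_in (ltn_ord b)))) ?expr0n.
have phj : ph p k = j.
  rewrite /phi (negbTE nI0); case: pickP => [j' /= hj' | /(_ j) /=]; last by rewrite pos.
  by apply/eqP; apply: contraTT hj' => /zero ->; rewrite ltxx.
by rewrite phj; split.
Qed.

Lemma invol p k : (p < l0)%N -> ~~ I0b p k -> ~~ I0b p (ph p k) /\ ph p (ph p k) = k.
Proof.
move=> hp nI0; have [_ pos _] := notI0 hp nI0.
have pos' : 0 < br3 p (ph p k) k by rewrite br3_sym23.
have nI0' : ~~ I0b p (ph p k).
  by apply: contraTN pos' => h; rewrite I0_br3 // ltxx.
split => //; have [_ _ z] := notI0 hp nI0'.
by apply/eqP; apply: contraTT pos'; rewrite eq_sym => /z ->; rewrite ltxx.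
Qed.

Lemma Schur p k : (p < l0)%N -> ~~ I0b p k ->
  exists2 mu : R, 0 < mu & forall x, x \in M k -> br (Vq p) (br (Vq p) x) = - mu *: x.
Proof.
move=> hp nI0; set D := br (Vq p).
have [mapk _ _] := notI0 hp nI0.
have [nI0' inv] := invol hp nI0.
have [mapk' _ _] := notI0 hp nI0'; rewrite inv in mapk'.
have D2 : forall x, x \in M k -> D (D x) \in M k by move=> x hx; apply: mapk'; apply: mapk.
pose A : 'M[R]_(d k) := \matrix_(u1, u2) fm (D (D (e k u1))) (e k u2).
have As : A^T = A.
  by apply/matrixP => u1 u2; rewrite !mxE /D fm_skew [RHS]fm_skew fmC.
have [r [c c0 cA]] := sym_eig' (d_gt0 k) As.
pose x := \sum_(a < d k) c 0 a *: e k a.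
have xin : x \in M k by apply: sum_in.
have DD : forall (a : R) y, D (D (a *: y)) = a *: D (D y) by move=> a y; rewrite /D !brZr.
have Dx : D (D x) = r *: x.
  rewrite (expand (D2 _ xin)) /x scaler_sumr; apply: eq_bigr => b _; rewrite scalerA; congr (_ *: _).
  rewrite /D !(glin_sum (glin_br _)) fm_suml -/D.
  have := congr1 (fun v : 'rV_(d k) => v 0 b) cA; rewrite !mxE => <-.
  by apply: eq_bigr => a _; rewrite DD fmZl mxE.
have nx : x != 0.
  apply: contraNneq c0 => x0; apply/eqP/rowP => b; rewrite mxE.
  by have := fm_sum_e (fun a => c 0 a) b; rewrite -/x x0 fm0l => <-.
pose g := fun y => D (D y) - r *: y.
have gl : glin g.
  move=> a y z; rewrite /g /D !brDr !brZr scalerDr scalerA (mulrC r) -scalerA.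
  by rewrite opprD addrACA scalerBr.
have gall : forall y, y \in M k -> g y \in (0 : {vspace 'rV[R]_n})%VS.
  apply: (irr_pre gl _ xin) => //.
  - move=> y w hy hw; rewrite !memv0 /g /D !(Dcomm _ hp hy) -brZr -brNr -brDr => /eqP ->.
    by rewrite br0r.
  - by rewrite memv0 /g Dx subrr.
have [a ha] : exists a : 'I_(d k), D (e k a) != 0.
  by move: nI0; rewrite /I0 negb_forall => /existsP.
have eqD : forall y, y \in M k -> D (D y) = r *: y.
  by move=> y /gall; rewrite memv0 subr_eq0 => /eqP.
exists (- r); last by move=> y hy; rewrite opprK eqD.
have := fm_skew (Vq p) (D (e k a)) (e k a); rewrite -/D eqD ?e_in // fmZl ONo eqxx mulr1.
move=> hr; rewrite oppr_gt0 hr oppr_lt0; apply: fm_pos.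
by [].
Qed.

Lemma Schur_pair p i : (p < l0)%N -> ~~ I0b p i ->
  exists2 mu : R, 0 < mu &
    (forall x, x \in M i -> br (Vq p) (br (Vq p) x) = - mu *: x) /\
    (forall x, x \in M (ph p i) -> br (Vq p) (br (Vq p) x) = - mu *: x).
Proof.
move=> hp nI0; have [mu mu0 hmu] := Schur hp nI0.
have [nI0' inv] := invol hp nI0.
have [mu' _ hmu'] := Schur hp nI0'.
have [mapi _ _] := notI0 hp nI0.
exists mu => //; split => // x hx; rewrite hmu' //; congr (_ *: _).
have [a ha] : exists a : 'I_(d i), br (Vq p) (e i a) != 0.
  by move: nI0; rewrite /I0 negb_forall => /existsP.
have yin := mapi _ (e_in (ltn_ord a)).
have := hmu' _ yin; rewrite (hmu (e i a)) ?e_in // brZr => /eqP.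
rewrite -subr_eq0 -scalerBl scaler_eq0 (negbTE ha) orbF subr_eq0 => /eqP ->.
by [].
Qed.

Lemma L1 p i mu (g2 : V -> V -> R) : (p < l0)%N -> ~~ I0b p i ->
  (forall x, x \in M (ph p i) -> br (Vq p) (br (Vq p) x) = - mu *: x) ->
  (forall x y z, g2 (x + y) z = g2 x z + g2 y z) ->
  (forall a x z, g2 (a *: x) z = a * g2 x z) ->
  (forall x y z, g2 z (x + y) = g2 z x + g2 z y) ->
  (forall a x z, g2 z (a *: x) = a * g2 z x) ->
  mu * \sum_(b < d (ph p i)) g2 (e (ph p i) b) (e (ph p i) b) =
  \sum_(a < d i) g2 (br (Vq p) (e i a)) (br (Vq p) (e i a)).
Proof.
move=> hp nI0 hmu gDl gZl gDr gZr.
set j := ph p i in hmu *; set D := br (Vq p) in hmu *.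
have [mapi _ _] := notI0 hp nI0.
have [nI0' inv] := invol hp nI0.
have [mapj _ _] := notI0 hp nI0'; rewrite inv in mapj.
have g0l : forall z, g2 0 z = 0 by move=> z; have := gZl 0 0 z; rewrite scale0r mul0r.
have g0r : forall z, g2 z 0 = 0 by move=> z; have := gZr 0 0 z; rewrite scale0r mul0r.
have gsl : forall (F : 'I_(d j) -> V) z, g2 (\sum_b F b) z = \sum_b g2 (F b) z.
  move=> F z; elim/big_rec2: _ => [|b y1 y2 _ <-]; [exact: g0l | exact: gDl].
have gsr : forall (F : 'I_(d j) -> V) z, g2 z (\sum_b F b) = \sum_b g2 z (F b).
  move=> F z; elim/big_rec2: _ => [|b y1 y2 _ <-]; [exact: g0r | exact: gDr].
have Din : forall b : 'I_(d j), D (e j b) \in M i by move=> b0; apply: mapj; apply: e_in.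
have orth : forall b b' : 'I_(d j),
   \sum_(a < d i) fm (D (e i a)) (e j b) * fm (D (e i a)) (e j b') = mu * (b == b')%:R.
  move=> b b'.
  transitivity (fm (D (e j b)) (D (e j b'))).
    rewrite (fm_expand _ (Din b)); apply: eq_bigr => a _.
    by rewrite /D (fm_skew _ (e i a) (e j b)) (fm_skew _ (e i a) (e j b')) mulrNN (fmC (e i a) (br (Vq p) (e j b))).
  by rewrite /D fm_skew -/D hmu ?e_in // fmZr ONo mulNr opprK.
rewrite [RHS](eq_bigr (fun a : 'I_(d i) => \sum_(b < d j) \sum_(b' < d j)
   (fm (D (e i a)) (e j b) * fm (D (e i a)) (e j b')) * g2 (e j b) (e j b'))); last first.
  move=> a _; rewrite /D {1 2}(expand (mapi _ (e_in (ltn_ord a)))) -/D gsl; apply: eq_bigr => b _.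
  rewrite gZl gsr mulr_sumr; apply: eq_bigr => b' _.
  by rewrite gZr mulrA.
rewrite exchange_big /= mulr_sumr; apply: eq_bigr => b _.
rewrite exchange_big /= (bigD1 b) //= -mulr_suml orth eqxx mulr1 big1 ?addr0 //.
by move=> b' nb; rewrite -mulr_suml orth eq_sym (negbTE nb) mulr0 mul0r.
Qed.

Lemma Tinv u x y z :
  fm (br (br u x) y) z + fm (br x (br u y)) z + fm (br x y) (br u z) = 0.
Proof. by rewrite -fmDl -br_deriv fm_skew addNr. Qed.

Lemma pointwise u x y z (A B C : R) :
  br u (br u x) = - A *: x -> br u (br u y) = - B *: y -> br u (br u z) = - C *: z ->
  (fm (br (br u x) (br u y)) z) ^+ 2 = A * B * (fm (br x y) z) ^+ 2.
Proof.
move=> hx hy hz.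
have e1 := Tinv u (br u x) y z.
have e2 := Tinv u x (br u y) z.
have e3 := Tinv u x y (br u z).
have e4 := Tinv u (br u x) (br u y) (br u z).
rewrite hx brZl fmZl in e1; rewrite hy brZr fmZl in e2; rewrite hz fmZr in e3.
rewrite hx hy hz brZl fmZl brZr fmZl fmZr in e4.
move: e1 e2 e3 e4.
set P := fm (br x y) z; set U := fm (br (br u x) (br u y)) z.
set Y := fm (br (br u x) y) (br u z); set Z := fm (br x (br u y)) (br u z).
move=> e1 e2 e3 e4.
have key : 2 * (U ^+ 2 - A * B * P ^+ 2) =
  U * ((- A * P + U + Y) + (U + - B * P + Z) - (Y + Z + - C * P)) +
  P * (A * (U + - B * P + Z) + B * (- A * P + U + Y) + (- A * Z + - B * Y + - C * U)).
  by ring.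
rewrite e1 e2 e3 e4 in key; rewrite !(mulr0, addr0, add0r, subr0) in key.
apply/eqP; rewrite -subr_eq0; move/eqP: key; rewrite mulf_eq0 pnatr_eq0 /=.
by [].
Qed.

Lemma L1sq p i mu (f : V -> R) : (p < l0)%N -> ~~ I0b p i ->
  (forall x, x \in M (ph p i) -> br (Vq p) (br (Vq p) x) = - mu *: x) ->
  (forall x y, f (x + y) = f x + f y) -> (forall a x, f (a *: x) = a * f x) ->
  mu * \sum_(b < d (ph p i)) f (e (ph p i) b) ^+ 2 =
  \sum_(a < d i) f (br (Vq p) (e i a)) ^+ 2.
Proof.
move=> hp nI0 hmu fD fZ.
have e2 : forall x, f x ^+ 2 = f x * f x by move=> x; rewrite expr2.
under eq_bigr do rewrite e2; under [RHS]eq_bigr do rewrite e2.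
apply: (@L1 p i mu (fun x y => f x * f y) hp nI0 hmu).
- by move=> x y z; rewrite fD mulrDl.
- by move=> a x z; rewrite fZ mulrA.
- by move=> x y z; rewrite fD mulrDr.
- by move=> a x z; rewrite fZ mulrCA.
Qed.

Lemma part_a p i j k : (p < l0)%N -> ~~ I0b p i -> ~~ I0b p j ->
  br3 (ph p i) (ph p j) k = br3 i j k.
Proof.
move=> hp nIi nIj.
have [mui mui0 [hi hi']] := Schur_pair hp nIi.
have [muj muj0 [hj hj']] := Schur_pair hp nIj.
have [C hC] : exists C : R, forall c : 'I_(d k),
    br (Vq p) (br (Vq p) (e k c)) = - C *: e k c.
  have [hk|nIk] := boolP (I0b p k).
    exists 0 => c; move/I0P: hk => hk; by rewrite hk br0r oppr0 scale0r.
  have [muk _ hmk] := Schur hp nIk.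
  by exists muk => c; rewrite hmk ?e_in.
set D := br (Vq p).
have n0 : mui * muj != 0 by rewrite mulf_neq0 // lt0r_neq0.
apply: (mulfI n0).
transitivity (muj * \sum_(b < d (ph p j)) \sum_(c < d k) \sum_(a < d i)
                 fm (br (D (e i a)) (e (ph p j) b)) (e k c) ^+ 2).
  rewrite (mulrC mui) -mulrA; congr (_ * _).
  rewrite /bracket3 exchange_big mulr_sumr; apply: eq_bigr => b _.
  rewrite exchange_big mulr_sumr; apply: eq_bigr => c _.
  apply: (L1sq (f := fun x => fm (br x (e (ph p j) b)) (e k c))) => //.
  - by move=> x y; rewrite brDl fmDl.
  - by move=> a x; rewrite brZl fmZl.
transitivity (\sum_(a < d i) \sum_(c < d k) \sum_(b < d j)
                 fm (br (D (e i a)) (D (e j b))) (e k c) ^+ 2).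
  under eq_bigr do rewrite exchange_big.
  rewrite exchange_big mulr_sumr; apply: eq_bigr => a _.
  rewrite exchange_big mulr_sumr; apply: eq_bigr => c _.
  apply: (L1sq (f := fun y => fm (br (D (e i a)) y) (e k c))) => //.
  - by move=> x y; rewrite brDr fmDl.
  - by move=> a' x; rewrite brZr fmZl.
rewrite /bracket3 mulr_sumr; apply: eq_bigr => a _.
rewrite exchange_big mulr_sumr; apply: eq_bigr => b _.
rewrite mulr_sumr; apply: eq_bigr => c _.
by rewrite /D (pointwise (hi _ (e_in (ltn_ord a))) (hj _ (e_in (ltn_ord b))) (hC c)).
Qed.

Lemma zero_T u x y z mu : mu != 0 -> br u (br u x) = - mu *: x -> br u y = 0 -> br u z = 0 ->
  fm (br x y) z = 0.
Proof.
move=> mu0 hx hy hz; have := Tinv u (br u x) y z.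
rewrite hx hy hz br0r fm0l fm0r !addr0 brZl fmZl mulNr => /eqP.
by rewrite oppr_eq0 mulf_eq0 (negbTE mu0) /= => /eqP.
Qed.

Lemma part_b p i j k : (p < l0)%N -> ~~ I0b p i -> I0b p j -> I0b p k ->
  br3 (ph p i) j k = br3 i j k.
Proof.
move=> hp nIi /I0P hj /I0P hk.
have [mu mu0 [hi hi']] := Schur_pair hp nIi.
have mun : mu != 0 by rewrite lt0r_neq0.
rewrite /bracket3 !big1 // => a _; apply: big1 => b _; apply: big1 => c _.
  by rewrite (zero_T mun (hi _ (e_in (ltn_ord a))) (hj b) (hk c)) expr0n.
by rewrite (zero_T mun (hi' _ (e_in (ltn_ord a))) (hj b) (hk c)) expr0n.
Qed.

Lemma HSq q x : (q < l0)%N ->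
  br3 q x (ph q x) = \sum_(b < d x) fm (br (Vq q) (e x b)) (br (Vq q) (e x b)).
Proof.
move=> hq; have [h|nI] := boolP (I0b q x).
  rewrite /phi h I0_br3 //; move/I0P: h => h.
  by rewrite big1 // => b _; rewrite h fm0l.
have [mapk _ _] := notI0 hq nI.
rewrite br3_p //; apply: eq_bigr => b _.
by rewrite (fm_norm (mapk _ (e_in (ltn_ord b)))).
Qed.

Lemma part_c p i q : (p < l0)%N -> ~~ I0b p i -> (q < l0)%N -> br (Vq p) (Vq q) = 0 ->
  br3 q (ph p i) (ph q (ph p i)) = br3 q i (ph q i).
Proof.
move=> hp nIi hq hpq; rewrite !HSq //.
have [mu mu0 [hi hi']] := Schur_pair hp nIi.
have mun : mu != 0 by rewrite lt0r_neq0.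
set E := br (Vq q); set D := br (Vq p).
have comm : forall w, E (D w) = D (E w).
  move=> w; rewrite /E /D br_deriv (br_skew (Vq q)) hpq oppr0 br0l add0r.
  by [].
apply: (mulfI mun).
rewrite (@L1 p i mu (fun x y => fm (E x) (E y))) //; last first.
- by move=> a x z; rewrite /E brZr fmZr.
- by move=> x y z; rewrite /E brDr fmDr.
- by move=> a x z; rewrite /E brZr fmZl.
- by move=> x y z; rewrite /E brDr fmDl.
rewrite mulr_sumr; apply: eq_bigr => a _.
rewrite comm {1}/D fm_skew -/D -!comm /D hi ?e_in // -/D.
by rewrite /E brZr -/E fmZr mulNr opprK.
Qed.
End Main.

Theorem lemma5p4 (R : realType) (n : nat)
  (br : 'rV[R]_n -> 'rV[R]_n -> 'rV[R]_n) (Q : 'M[R]_n)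
  (l : nat) (d : 'I_l -> nat) (e : 'I_l -> nat -> 'rV[R]_n) (l0 : nat)
  (p i : 'I_l) :
  normalizer_adapted_setting br Q d e l0 ->
  (p < l0)%N ->
  Iset br Q d e p i ->
  [/\ (forall j k : 'I_l, ~~ I0 br d e p j ->
         bracket3 br Q d e (phi br Q d e p i) (phi br Q d e p j) k
         = bracket3 br Q d e i j k),
      (forall j k : 'I_l, I0 br d e p j -> I0 br d e p k ->
         bracket3 br Q d e (phi br Q d e p i) j k = bracket3 br Q d e i j k) &
      (forall q : 'I_l, (q < l0)%N -> br (Vp e p) (Vp e q) = 0 ->
         bracket3 br Q d e q (phi br Q d e p i)
                  (phi br Q d e q (phi br Q d e p i))
         = bracket3 br Q d e q i (phi br Q d e q i))].
Proof.
move=> HS hp /andP [nIi _]; split.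
- by move=> j k nIj; apply: (part_a HS k hp nIi nIj).
- by move=> j k hj hk; apply: (part_b HS hp nIi hj hk).
- by move=> q hq hpq; apply: (part_c HS hp nIi hq hpq).
Qed.
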